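(* Let $(M,g)$ be an FRW space-time with comoving vector $u$, $H=\dot a/a$, mimetic field $\phi=t$ (so $u_k=-\nabla_k\phi$, $\chi:=\square\phi=-3H$), let $\gamma$ be a constant and $\zeta(t),V(t)$ smooth functions such that the tensor $$X_{kl}=g_{kl}\big[V+\gamma\nabla_p\chi\nabla^p\phi\big]+2\zeta\nabla_k\phi\nabla_l\phi-\gamma\big[\nabla_k\phi\nabla_l\chi+\nabla_k\chi\nabla_l\phi\big]$$ is divergence-free. Then $X_{kl}=2(\zeta+3\gamma\dot H)u_ku_l+(V+3\gamma\dot H)g_{kl}$, and the tensor $$\mathscr C_{kl}=2(\zeta+3\gamma\dot H)u_ku_l+\frac13(2\zeta-V+3\gamma\dot H)g_{kl}$$ is a Codazzi tensor with $X_{kl}=\mathscr C_{kl}-g_{kl}\mathscr C^r{}_r$. Hence the field equations $R_{kl}-\frac12Rg_{kl}=T_{kl}+X_{kl}$ are Cotton gravity equations in Codazzi form.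
   Context: FRW space-time: $ds^2=-dt^2+a(t)^2g^\star_{\mu\nu}(\mathbf x)dx^\mu dx^\nu$ with $g^\star$ a 3-dimensional Riemannian metric of constant curvature, $a>0$, $H=\dot a/a$, $u=\partial_t$ ($u_k=-\nabla_kt$), dot $=d/dt$, $\square=\nabla^k\nabla_k$. A symmetric tensor $\mathscr C$ is Codazzi if $\nabla_j\mathscr C_{kl}=\nabla_k\mathscr C_{jl}$. *)

(* Defs.v *)
From HB Require Import structures.
From mathcomp Require Import all_boot all_order all_algebra.
From mathcomp Require Import all_classical all_reals all_analysis.
Set Implicit Arguments. Unset Strict Implicit. Unset Printing Implicit Defensive.
Import Order.TTheory GRing.Theory Num.Theory.
Import numFieldNormedType.Exports.
Local Open Scope ring_scope.
Local Open Scope classical_set_scope.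

Definition ei {R : realType} (n : nat) (i : 'I_n) : 'rV[R]_n := delta_mx 0 i.

Definition pd {R : realType} (n : nat) (i : 'I_n) (f : 'rV[R]_n -> R)
  (x : 'rV[R]_n) : R := derive f x (ei i).

Fixpoint iter_pd {R : realType} (n : nat) (l : seq 'I_n) (f : 'rV[R]_n -> R)
  : 'rV[R]_n -> R :=
  match l with
  | [::] => f
  | i :: l' => pd i (iter_pd l' f)
  end.

Definition smooth_on {R : realType} (n : nat) (U : set 'rV[R]_n)
  (f : 'rV[R]_n -> R) : Prop :=
  forall (l : seq 'I_n) (x : 'rV[R]_n), U x ->
    (forall i : 'I_n, derivable (iter_pd l f) x (ei i)) /\
    {for x, continuous (iter_pd l f)}.

Definition smooth1_on {R : realType} (I : set R) (f : R -> R) : Prop :=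
  forall (k : nat) (t : R), I t -> derivable (iter k (fun h => derive1 h) f) t 1.

Definition metric (R : realType) (n : nat) := 'I_n -> 'I_n -> 'rV[R]_n -> R.

Definition gmx {R : realType} (n : nat) (g : metric R n) (x : 'rV[R]_n) : 'M[R]_n :=
  \matrix_(i, j) g i j x.

Definition ginv {R : realType} (n : nat) (g : metric R n) (x : 'rV[R]_n) (i j : 'I_n) : R :=
  invmx (gmx g x) i j.

Definition Gam {R : realType} (n : nat) (g : metric R n) (k i j : 'I_n)
  (x : 'rV[R]_n) : R :=
  2^-1 * \sum_(l < n) ginv g x k l *
     (pd i (g l j) x + pd j (g l i) x - pd l (g i j) x).

Definition covD1 {R : realType} (n : nat) (g : metric R n)
  (w : 'I_n -> 'rV[R]_n -> R) (j k : 'I_n) (x : 'rV[R]_n) : R :=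
  pd j (w k) x - \sum_(m < n) Gam g m j k x * w m x.

Definition covD2 {R : realType} (n : nat) (g : metric R n)
  (T : 'I_n -> 'I_n -> 'rV[R]_n -> R) (j k l : 'I_n) (x : 'rV[R]_n) : R :=
  pd j (T k l) x
  - \sum_(m < n) (Gam g m j k x * T m l x + Gam g m j l x * T k m x).

Definition box {R : realType} (n : nat) (g : metric R n) (f : 'rV[R]_n -> R)
  (x : 'rV[R]_n) : R :=
  \sum_(j < n) \sum_(k < n) ginv g x j k * covD1 g (fun k => pd k f) j k x.

(* Riemann tensor R^l_{ijk}, with R(d_i,d_j)d_k = R^l_{ijk} d_l *)
Definition Riem {R : realType} (n : nat) (g : metric R n) (l i j k : 'I_n)
  (x : 'rV[R]_n) : R :=
  pd i (Gam g l j k) x - pd j (Gam g l i k) x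
  + \sum_(m < n) (Gam g l i m x * Gam g m j k x - Gam g l j m x * Gam g m i k x).

Definition const_curvature {R : realType} (n : nat) (g : metric R n)
  (U : set 'rV[R]_n) : Prop :=
  exists K : R, forall (l i j k : 'I_n) (y : 'rV[R]_n), U y ->
    Riem g l i j k y = K * ((l == i)%:R * g j k y - (l == j)%:R * g i k y).

Definition codazzi_on {R : realType} (n : nat) (g : metric R n)
  (C : 'I_n -> 'I_n -> 'rV[R]_n -> R) (D : set 'rV[R]_n) : Prop :=
  forall (j k l : 'I_n) (x : 'rV[R]_n), D x -> covD2 g C j k l x = covD2 g C k j l x.

Definition divfree_on {R : realType} (n : nat) (g : metric R n)
  (X : 'I_n -> 'I_n -> 'rV[R]_n -> R) (D : set 'rV[R]_n) : Prop :=
  forall (l : 'I_n) (x : 'rV[R]_n), D x ->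
    \sum_(j < n) \sum_(k < n) ginv g x j k * covD2 g X j k l x = 0.

Definition time {R : realType} (x : 'rV[R]_4) : R := x 0 ord0.
Definition spat {R : realType} (x : 'rV[R]_4) : 'rV[R]_3 := \row_(j < 3) x 0 (lift ord0 j).

(* ds^2 = -dt^2 + a(t)^2 gs_{mu nu}(x) dx^mu dx^nu *)
Definition frw {R : realType} (a : R -> R) (gs : metric R 3) : metric R 4 :=
  fun i j x =>
    match unlift ord0 i, unlift ord0 j with
    | Some i', Some j' => a (time x) ^+ 2 * gs i' j' (spat x)
    | None, None => -1
    | _, _ => 0
    end.

Definition Hub {R : realType} (a : R -> R) (t : R) : R := derive1 a t / a t.
Definition Hdot {R : realType} (a : R -> R) (t : R) : R := derive1 (Hub a) t.

Definition ucov {R : realType} (k : 'I_4) (x : 'rV[R]_4) : R := - pd k (@time R) x.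

Definition Xmim {R : realType} (g : metric R 4) (phi : 'rV[R]_4 -> R) (gam : R)
  (V zeta : R -> R) (k l : 'I_4) (x : 'rV[R]_4) : R :=
  g k l x * (V (time x) + gam * \sum_(p < 4) \sum_(q < 4)
                 ginv g x p q * pd p (box g phi) x * pd q phi x)
  + 2 * zeta (time x) * pd k phi x * pd l phi x
  - gam * (pd k phi x * pd l (box g phi) x + pd k (box g phi) x * pd l phi x).

Definition trace2 {R : realType} (n : nat) (g : metric R n)
  (C : 'I_n -> 'I_n -> 'rV[R]_n -> R) (x : 'rV[R]_n) : R :=
  \sum_(r < n) \sum_(s < n) ginv g x r s * C r s x.

(* Main.v *)
Require Import Defs.
From HB Require Import structures.
From mathcomp Require Import all_boot all_order all_algebra.
From mathcomp Require Import all_classical all_reals all_analysis.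
From mathcomp Require Import ring.
Import Order.TTheory GRing.Theory Num.Theory.
Import numFieldNormedType.Exports.
Local Open Scope ring_scope.
Local Open Scope classical_set_scope.


Section S.
Context {R : realType}.

Lemma L_line (V1 V2 : normedModType R) (f : V1 -> R) (F : V2 -> R) x v z w :
  (forall h : R, f (h *: v + x) = F (h *: w + z)) ->
  derive f x v = derive F z w /\ (derivable f x v <-> derivable F z w).
Proof.
move=> H.
have E0 : f x = F z by have := H 0; rewrite !scale0r !add0r.
rewrite /derive /derivable.
have -> : (fun h : R => h^-1 *: ((f \o shift x) (h *: v) - f x)) =
          (fun h : R => h^-1 *: ((F \o shift z) (h *: w) - F z)).
  by apply: funext => h /=; rewrite E0 H.
by [].
Qed.

Lemma L_loc (V1 : normedModType R) (f g : V1 -> R) x v :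
  (\forall h \near 0, f (h *: v + x) = g (h *: v + x)) ->
  derive f x v = derive g x v /\ (derivable f x v <-> derivable g x v).
Proof.
move=> H.
have E0 : f x = g x by have := nbhs_singleton H; rewrite !scale0r !add0r.
set F1 := (fun h : R => h^-1 *: ((f \o shift x) (h *: v) - f x)).
set F2 := (fun h : R => h^-1 *: ((g \o shift x) (h *: v) - g x)).
have HN : {near 0^', F1 =1 F2}.
  apply: (@nbhs_dnbhs _ (0:R)); apply: filterS H => h /= eh.
  by rewrite /F1 /F2 /= eh E0.
have HN' : {near 0^', F2 =1 F1} by apply: filterS HN => h ->.
have EF : F1 @ 0^' = F2 @ 0^'.
  apply/funext => A; apply/propext; split.
  - by move=> HA; first [exact: (near_eq_cvg HN) | exact: (near_eq_cvg HN')].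
  - by move=> HA; first [exact: (near_eq_cvg HN) | exact: (near_eq_cvg HN')].
by rewrite /derive /derivable -/F1 -/F2 EF.
Qed.


Lemma near_line (W : normedModType R) (U : set W) y w :
  open U -> U y -> \forall h \near (0:R), U (h *: w + y).
Proof.
move=> oU Uy.
have C : (fun h : R => h *: w + y) @ 0 --> y.
  have C1 : (fun h : R => h *: w) @ 0 --> 0 *: w by apply: scalel_continuous.
  have := cvgD C1 (cvg_cst y).
  by rewrite scale0r add0r => HH; apply: HH.
apply: C; apply: open_nbhs_nbhs; split => //.
Qed.

Definition dl (i : 'I_4) : R := (i == ord0)%:R.

Lemma time_shift (j : 'I_4) (h : R) (x : 'rV[R]_4) :
  time (h *: ei j + x) = h * dl j + time x.
Proof. by rewrite /time /ei /dl !mxE eqxx /= eq_sym. Qed.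

Lemma spat_shift0 (h : R) (x : 'rV[R]_4) : spat (h *: ei ord0 + x) = spat x.
Proof.
apply/rowP => k; rewrite /spat /ei !mxE /=.
by rewrite mulr0 add0r.
Qed.

Lemma spat_shiftS (j : 'I_3) (h : R) (x : 'rV[R]_4) :
  spat (h *: ei (lift ord0 j) + x) = h *: ei j + spat x.
Proof.
apply/rowP => k; rewrite /spat /ei !mxE /=.
by rewrite (inj_eq (@lift_inj _ ord0)).
Qed.



Lemma dl0 : dl ord0 = 1. Proof. by rewrite /dl eqxx. Qed.
Lemma dlS (j : 'I_3) : dl (lift ord0 j) = 0. Proof. by []. Qed.

Lemma dM (V : normedModType R) (f g : V -> R) x v :
  derivable f x v -> derivable g x v ->
  derive (fun y => f y * g y) x v = f x * derive g x v + g x * derive f x v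
  /\ derivable (fun y => f y * g y) x v.
Proof. move=> df dg; split; [exact: (deriveM df dg) | exact: (derivableM df dg)]. Qed.


Lemma pd_timeF (F : R -> R) (j : 'I_4) (x : 'rV[R]_4) : derivable F (time x) 1 ->
  pd j (fun z => F (time z)) x = dl j * derive F (time x) 1 /\
  derivable (fun z => F (time z)) x (ei j).
Proof.
move=> dF; rewrite /pd; case: (unliftP ord0 j) => [j'|] ->.
- have [-> ->] := @L_line _ _ (fun z => F (time z)) (fun _ : R => F (time x)) x (ei (lift ord0 j')) 0 1
    ltac:(by move=> h /=; rewrite time_shift dlS mulr0 add0r).
  by rewrite dlS mul0r; split; [exact: derive_cst | exact: derivable_cst].
- have [-> ->] := @L_line _ _ (fun z => F (time z)) F x (ei ord0) (time x) 1
    ltac:(by move=> h /=; rewrite time_shift dl0 mulr1 -[h *: 1]/(h * 1) mulr1).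
  by rewrite dl0 mul1r.
Qed.

Lemma pd_time (j : 'I_4) (x : 'rV[R]_4) : pd j (@time R) x = dl j.
Proof.
have did : derivable (fun s : R => s) (time x) 1 by exact: derivable_id.
have [+ _] := @pd_timeF (fun s => s) j x did.
rewrite /pd => ->.
have -> : derive (fun s : R => s) (time x) 1 = 1 by exact: derive_id.
by rewrite mulr1.
Qed.


End S.
Arguments dM {R V f g x v}.


Section S2.
Context {R : realType}.

Lemma alg1 (A A' G : R) : A != 0 -> G*(A*A' + A*A') = 2*(A'/A)*(A^+2*G).
Proof. move=> h. field. exact: h. Qed.

Context (a : R -> R) (gs : metric R 3).

Lemma frw00 : frw a gs ord0 ord0 = fun _ => -1.
Proof. by apply: funext => x; rewrite /frw unlift_none. Qed.
Lemma frw0S j : frw a gs ord0 (lift ord0 j) = fun _ => 0.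
Proof. by apply: funext => x; rewrite /frw unlift_none liftK. Qed.
Lemma frwS0 j : frw a gs (lift ord0 j) ord0 = fun _ => 0.
Proof. by apply: funext => x; rewrite /frw unlift_none liftK. Qed.
Lemma frwSS i j : frw a gs (lift ord0 i) (lift ord0 j) =
  fun x => a (time x) ^+ 2 * gs i j (spat x).
Proof. by apply: funext => x; rewrite /frw !liftK. Qed.

Lemma frw_sym (gsym : forall i j y, gs i j y = gs j i y) k l :
  frw a gs k l = frw a gs l k.
Proof.
case: (unliftP ord0 k) => [k'|] ->; case: (unliftP ord0 l) => [l'|] ->;
 rewrite ?frw00 ?frw0S ?frwS0 ?frwSS //.
by apply: funext => x; rewrite gsym.
Qed.

Lemma frw_0k k x : frw a gs ord0 k x = - dl k.
Proof. by case: (unliftP ord0 k) => [k'|] ->; rewrite ?frw00 ?frw0S ?dl0 ?dlS ?oppr0. Qed.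
Lemma frw_k0 k x : frw a gs k ord0 x = - dl k.
Proof. by case: (unliftP ord0 k) => [k'|] ->; rewrite ?frw00 ?frwS0 ?dl0 ?dlS ?oppr0. Qed.

Lemma pd_g0 k j x : pd j (frw a gs ord0 k) x = 0.
Proof.
by case: (unliftP ord0 k) => [k'|] ->; rewrite ?frw00 ?frw0S; exact: derive_cst.
Qed.

Lemma pd0_g k l x : derivable a (time x) 1 -> a (time x) != 0 ->
  pd ord0 (frw a gs k l) x = 2 * (derive1 a (time x) / a (time x)) * (frw a gs k l x + dl k * dl l).
Proof.
move=> da an0.
case: (unliftP ord0 k) => [k'|] ->; case: (unliftP ord0 l) => [l'|] ->;
 rewrite ?frw00 ?frw0S ?frwS0 ?frwSS ?dl0 ?dlS /pd ?derive_cst ?mul0r ?mulr0 ?addr0 ?subrr //.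
- have [-> _] := @L_line _ _ _ (fun x => a (time x) ^+ 2 * gs k' l' (spat x))
     (fun s => a s * a s * gs k' l' (spat x)) x (ei ord0) (time x) 1
     ltac:(by move=> h /=; rewrite time_shift dl0 spat_shift0 mulr1 -[h *: 1]/(h * 1) mulr1 expr2).
  have [E1 D1] := dM da da.
  have [-> _] := dM D1 (@derivable_cst _ _ _ (gs k' l' (spat x)) (time x) 1).
  rewrite E1 derive_cst derive1E /cst.
  rewrite mulr0 add0r.
  move: (a (time x)) ('D_1 a (time x)) (gs k' l' (spat x)) an0 => A A' G hA.
  exact: alg1.
all: move: (derive1 a (time x) / a (time x)) => c.
- by rewrite mulr0.
- by rewrite mulr0.
- rewrite mulr1 addNr mulr0 //.
Qed.

Lemma dvb_g k l j x : derivable a (time x) 1 ->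
  (forall i' j' k', derivable (gs i' j') (spat x) (ei k')) ->
  derivable (frw a gs k l) x (ei j).
Proof.
move=> da dg.
case: (unliftP ord0 k) => [k'|] ->; case: (unliftP ord0 l) => [l'|] ->;
 rewrite ?frw00 ?frw0S ?frwS0 ?frwSS; last 3 first.
- exact: (@derivable_cst _ _ _ 0 x (ei j)).
- exact: (@derivable_cst _ _ _ 0 x (ei j)).
- exact: (@derivable_cst _ _ _ (-1 : R) x (ei j)).
case: (unliftP ord0 j) => [j'|] ->.
- have [_ ->] := @L_line _ _ _ (fun x => a (time x) ^+ 2 * gs k' l' (spat x))
     (fun w => a (time x) ^+ 2 * gs k' l' w) x (ei (lift ord0 j')) (spat x) (ei j')
     ltac:(by move=> h /=; rewrite time_shift dlS spat_shiftS mulr0 add0r).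
  have [_ H] := dM (@derivable_cst _ _ _ (a (time x) ^+ 2) (spat x) (ei j')) (dg k' l' j').
  exact: H.
- have [_ ->] := @L_line _ _ _ (fun x => a (time x) ^+ 2 * gs k' l' (spat x))
     (fun s => a s * a s * gs k' l' (spat x)) x (ei ord0) (time x) 1
     ltac:(by move=> h /=; rewrite time_shift dl0 spat_shift0 mulr1 -[h *: 1]/(h * 1) mulr1 expr2).
  have [_ D1] := dM da da.
  by have [_ H] := dM D1 (@derivable_cst _ _ _ (gs k' l' (spat x)) (time x) 1).
Qed.


End S2.


Section S3.
Context {R : realType}.
Context (a : R -> R) (gs : metric R 3).

Lemma gs_unit y : (forall v : 'rV[R]_3, v != 0 -> 0 < (v *m gmx gs y *m v^T) 0 0) ->
  gmx gs y \in unitmx.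
Proof.
move=> pdef; rewrite unitmxE unitfE; apply/negP => /det0P [v nv vA].
by have := pdef v nv; rewrite vA mul0mx mxE ltxx.
Qed.

Definition ginvF (x : 'rV[R]_4) (i j : 'I_4) : R :=
  match unlift ord0 i, unlift ord0 j with
  | Some i', Some j' => (a (time x) ^+ 2)^-1 * invmx (gmx gs (spat x)) i' j'
  | None, None => -1
  | _, _ => 0
  end.

Lemma gmx_mul x : a (time x) != 0 -> gmx gs (spat x) \in unitmx ->
  gmx (frw a gs) x *m (\matrix_(i, j) ginvF x i j) = 1%:M.
Proof.
move=> an0 gu; apply/matrixP => i j; rewrite !mxE big_ord_recl /= !mxE.
have E : forall k : 'I_3, gmx (frw a gs) x ord0 (lift ord0 k) = 0.
  by move=> k; rewrite mxE frw0S.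
rewrite /ginvF.
case: (unliftP ord0 i) => [i'|] ->; case: (unliftP ord0 j) => [j'|] ->;
  rewrite ?unlift_none ?liftK ?frw00 ?frw0S ?frwS0 ?frwSS /=.
- rewrite mul0r add0r.
  have -> : \sum_(k < 3) gmx (frw a gs) x (lift ord0 i') (lift ord0 k) *
     (\matrix_(i0, j0) match unlift ord0 i0 with
                       | Some i'0 => match unlift ord0 j0 with
                                     | Some j'0 => (a (time x) ^+ 2)^-1 * invmx (gmx gs (spat x)) i'0 j'0
                                     | None => 0 end
                       | None => match unlift ord0 j0 with | Some _ => 0 | None => -1 end
                       end) (lift ord0 k) (lift ord0 j') =
     \sum_(k < 3) (gmx gs (spat x) i' k * invmx (gmx gs (spat x)) k j').
    apply: eq_bigr => k _; rewrite !mxE !liftK frwSS /=.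
    move: (a (time x) ^+ 2) (expf_neq0 2 an0) => c hc.
    by rewrite mulrACA mulfV // mul1r.
  have := congr1 (fun M : 'M[R]_3 => M i' j') (mulmxV gu); rewrite !mxE => ->.
  by rewrite (inj_eq (@lift_inj _ ord0)).
- by rewrite big1 ?mul0r ?addr0 // => k _; rewrite !mxE liftK unlift_none mulr0.
- by rewrite big1 ?mulr0 ?addr0 // => k _; rewrite E mul0r.
- by rewrite big1 ?mulrNN ?mulr1 ?addr0 // => k _; rewrite E mul0r.
Qed.

Lemma ginv_frw x : a (time x) != 0 -> gmx gs (spat x) \in unitmx ->
  (gmx (frw a gs) x \in unitmx) /\ forall i j, ginv (frw a gs) x i j = ginvF x i j.
Proof.
move=> an0 gu; have M := gmx_mul x an0 gu.
have [U _] := mulmx1_unit M; split => // i j; rewrite /ginv.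
have -> : invmx (gmx (frw a gs) x) = \matrix_(i, j) ginvF x i j.
  by rewrite -[RHS]mul1mx -(mulVmx U) -mulmxA M mulmx1.
by rewrite mxE.
Qed.

Lemma ginv0l x l : a (time x) != 0 -> gmx gs (spat x) \in unitmx ->
  ginv (frw a gs) x ord0 l = - dl l.
Proof.
move=> an0 gu; have [_ ->] := ginv_frw x an0 gu.
by rewrite /ginvF unlift_none; case: (unliftP ord0 l) => [l'|] ->; rewrite ?liftK ?unlift_none ?dl0 ?dlS ?oppr0.
Qed.

End S3.


Section S4.
Context {R : realType}.

Lemma mm_inv (n : nat) (g : metric R n) x l l' : gmx g x \in unitmx ->
  \sum_(m < n) g l m x * ginv g x m l' = (l == l')%:R.
Proof.
move=> U; have := congr1 (fun M : 'M[R]_n => M l l') (mulmxV U).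
rewrite !mxE => <-; apply: eq_bigr => m _; by rewrite /ginv mxE.
Qed.

Lemma G1 (n : nat) (g : metric R n) x j k l : gmx g x \in unitmx ->
  (forall i j, g i j x = g j i x) ->
  \sum_(m < n) Gam g m j k x * g m l x =
  2^-1 * (pd j (g l k) x + pd k (g l j) x - pd l (g j k) x).
Proof.
move=> U sym; rewrite /Gam.
under eq_bigr => m _ do rewrite -mulrA mulr_suml.
rewrite -mulr_sumr exchange_big /=; congr (_ * _).
under eq_bigr => l' _ do (under eq_bigr => m _ do rewrite mulrAC (sym m l) (mulrC (ginv g x m l'))).
under eq_bigr => l' _ do rewrite -mulr_suml (mm_inv _ _ _ _ _ U).
rewrite (bigD1 l) //= eqxx mul1r big1 ?addr0 // => l' /negbTE.
by rewrite eq_sym => ->; rewrite mul0r.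
Qed.

Lemma G2 (n : nat) (g : metric R n) x : gmx g x \in unitmx ->
  (forall i j, g i j x = g j i x) ->
  \sum_(j < n) \sum_(k < n) ginv g x j k * g j k x = n%:R.
Proof.
move=> U sym; rewrite exchange_big /=.
under eq_bigr => k _ do (under eq_bigr => j _ do rewrite sym mulrC); rewrite /=.
under eq_bigr => k _ do rewrite mm_inv // eqxx.
by rewrite sumr_const card_ord.
Qed.

Lemma sum_dl (F : 'I_4 -> R) : \sum_(m < 4) F m * dl m = F ord0.
Proof.
by rewrite big_ord_recl dl0 mulr1 big1 ?addr0 // => m _; rewrite dlS mulr0.
Qed.

Lemma sum_dl2 (F : 'I_4 -> 'I_4 -> R) :
  \sum_(j < 4) \sum_(k < 4) F j k * (dl j * dl k) = F ord0 ord0.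
Proof.
under eq_bigr => j _ do (under eq_bigr => k _ do rewrite mulrA); rewrite /=.
under eq_bigr => j _ do rewrite sum_dl.
by rewrite (sum_dl (fun j => F j ord0)).
Qed.

End S4.


Section S5.
Context {R : realType}.

Lemma alg2 (c w : R) : 2^-1 * - (0 + 0 - 2 * c * w) = c * w.
Proof. by field. Qed.

Context (a : R -> R) (gs : metric R 3).
Hypothesis gsym : forall i j y, gs i j y = gs j i y.

Lemma frw_symx x i j : frw a gs i j x = frw a gs j i x.
Proof. by rewrite (frw_sym _ _ gsym). Qed.

Lemma Gam0 x j k : derivable a (time x) 1 -> a (time x) != 0 ->
  gmx gs (spat x) \in unitmx ->
  Gam (frw a gs) ord0 j k x = Hub a (time x) * (frw a gs j k x + dl j * dl k).
Proof.
move=> da an0 gu; rewrite /Gam.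
under eq_bigr => l _ do rewrite (ginv0l _ _ _ _ an0 gu) mulNr mulrC -mulNr.
rewrite sum_dl !pd_g0 pd0_g //.
rewrite /Hub; move: (_ / _) (frw a gs j k x + _) => c w.
exact: alg2.
Qed.

Lemma alg3 (H A : R) : - H * (4%:R + A) = -3 * H -> True.
Proof. by []. Qed.

Lemma box_time z : derivable a (time z) 1 -> a (time z) != 0 ->
  gmx gs (spat z) \in unitmx ->
  box (frw a gs) (@time R) z = -3 * Hub a (time z).
Proof.
move=> da an0 gu.
have [U _] := ginv_frw _ _ _ an0 gu.
rewrite /box.
have E : forall j k, covD1 (frw a gs) (fun k => pd k (@time R)) j k z
   = - Hub a (time z) * frw a gs j k z + - Hub a (time z) * (dl j * dl k).
  move=> j k; rewrite /covD1.
  have -> : pd k (@time R) = fun _ => dl k by apply: funext => y; rewrite pd_time.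
  under eq_bigr => m _ do rewrite pd_time.
  rewrite /pd derive_cst sub0r sum_dl Gam0 //.
  by rewrite -mulrDr mulNr.
under eq_bigr => j _ do (under eq_bigr => k _ do rewrite E mulrDr mulrCA [ginv _ _ _ _ * (- _ * _)]mulrCA).
rewrite /=.
under eq_bigr => j _ do rewrite big_split /=.
under eq_bigr => j _ do rewrite -!mulr_sumr -mulrDr.
rewrite -mulr_sumr big_split /=.
have -> : \sum_(i < 4) \sum_(i0 < 4) ginv (frw a gs) z i i0 * frw a gs i i0 z = 4%:R.
  by apply: G2 => // i j; apply: frw_symx.
rewrite (sum_dl2 (fun j k => ginv (frw a gs) z j k)) (ginv0l _ _ _ _ an0 gu) dl0.
move: (Hub a (time z)) => c; by field.
Qed.

End S5.


Section S6.
Context {R : realType}.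

Lemma alg_term (G1 G2 Pm Qm dlm dll dlk gml gmk : R) :
  G1 * (Pm*(dlm*dll) + Qm*gml) + G2 * (Pm*(dlk*dlm) + Qm*gmk) =
  Pm*(dll*(G1*dlm)) + Qm*(G1*gml) + (Pm*(dlk*(G2*dlm)) + Qm*(G2*gmk)).
Proof. by ring. Qed.

Context (a : R -> R) (gs : metric R 3).
Hypothesis gsym : forall i j y, gs i j y = gs j i y.

Definition Yf (P Q : R -> R) (m n : 'I_4) (w : 'rV[R]_4) : R :=
  P (time w) * (dl m * dl n) + Q (time w) * frw a gs m n w.

Lemma pd_Yf P Q k l j x : derivable a (time x) 1 ->
  (forall i' j' k', derivable (gs i' j') (spat x) (ei k')) ->
  derivable P (time x) 1 -> derivable Q (time x) 1 ->
  pd j (Yf P Q k l) x = dl j * derive P (time x) 1 * (dl k * dl l)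
    + (Q (time x) * pd j (frw a gs k l) x + frw a gs k l x * (dl j * derive Q (time x) 1)).
Proof.
move=> da dgs dP dQ.
have [EP DP] := pd_timeF P j x dP.
have [EQ DQ] := pd_timeF Q j x dQ.
have Dg := dvb_g a gs k l j x da dgs.
have [E1 D1] := dM DP (@derivable_cst _ _ _ (dl k * dl l) x (ei j)).
have [E2 D2] := dM DQ Dg.
rewrite /pd /Yf.
have -> : (fun w => P (time w) * (dl k * dl l) + Q (time w) * frw a gs k l w) =
  (fun w => P (time w) * cst (dl k * dl l) w) + (fun w => Q (time w) * frw a gs k l w).
  by [].
rewrite deriveD //.
rewrite E1 E2 derive_cst mulr0 add0r.
rewrite /pd in EP EQ; rewrite EP EQ /cst.
by rewrite mulrC.
Qed.

Lemma alg_cov (d P' Q' dk dl_ dj pQ g gkl Pt Q1 Q2 Q3 G0k G0l Hh gjk gjl: R) :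
  Q1 + Q2 = pQ ->
  d * P' * (dk * dl_) + (Q' * pQ + g * (dj * Q')) -
  (P' * 0 + 0) = d * P' * (dk * dl_) + (Q' * pQ + g * (dj * Q')) -> True.
Proof. by []. Qed.

Lemma covD2_form (Y : 'I_4 -> 'I_4 -> 'rV[R]_4 -> R) (P Q : R -> R) x j k l :
  derivable a (time x) 1 -> a (time x) != 0 -> gmx gs (spat x) \in unitmx ->
  (forall i' j' k', derivable (gs i' j') (spat x) (ei k')) ->
  derivable P (time x) 1 -> derivable Q (time x) 1 ->
  (forall m n, Y m n x = Yf P Q m n x) ->
  (\forall h \near 0, Y k l (h *: ei j + x) = Yf P Q k l (h *: ei j + x)) ->
  covD2 (frw a gs) Y j k l x =
    dl j * (derive P (time x) 1 * (dl k * dl l) + derive Q (time x) 1 * frw a gs k l x)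
    - P (time x) * Hub a (time x) *
      ((frw a gs j k x + dl j * dl k) * dl l + (frw a gs j l x + dl j * dl l) * dl k).
Proof.
move=> da an0 gu dgs dP dQ Yx Ynear.
have [U _] := ginv_frw _ _ _ an0 gu.
have symx : forall i j, frw a gs i j x = frw a gs j i x by move=> i j'; apply: frw_symx.
rewrite /covD2 {1}/pd.
have [-> _] := @L_loc _ _ _ _ _ _ Ynear.
rewrite -/(pd j (Yf P Q k l) x) pd_Yf //.
under eq_bigr => m _ do rewrite !Yx /Yf (symx k m) alg_term.
rewrite !big_split /= -!mulr_sumr !sum_dl !G1 // !Gam0 //.
rewrite !(frw_sym _ _ gsym l k) !(frw_sym _ _ gsym l j) !(frw_sym _ _ gsym k j).
move: (derive P _ _) (derive Q _ _) (P (time x)) (Q (time x)) (Hub a (time x)) => P' Q' p q hh.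
move: (pd j _ x) (pd k _ x) (pd l _ x) => pj pk pl.
move: (dl j) (dl k) (dl l) (frw a gs k l x) (frw a gs j k x) (frw a gs j l x) => dj dk dl' gkl gjk gjl.
move: P' Q' => P' Q'.
by field.
Qed.

End S6.


Section S7.
Context {R : realType}.

Lemma dvM {V : normedModType R} {f g : V -> R} {x v : V} :
  derivable f x v -> derivable g x v -> derivable (fun y => f y * g y) x v.
Proof. by move=> df dg; have [_ H] := dM df dg. Qed.
Lemma dvD {V : normedModType R} {f g : V -> R} {x v : V} :
  derivable f x v -> derivable g x v -> derivable (fun y => f y + g y) x v.
Proof. by move=> df dg; exact: (derivableD df dg). Qed.
Lemma dvN {V : normedModType R} {f : V -> R} {x v : V} :
  derivable f x v -> derivable (fun y => - f y) x v.
Proof.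
move=> df; have := dvM (@derivable_cst _ _ _ (-1 : R) x v) df.
by have -> : (fun y => cst (-1 : R) y * f y) = (fun y => - f y)
  by apply: funext => y; rewrite /cst mulN1r.
Qed.
Lemma dvV {V : normedModType R} {f : V -> R} {x v : V} :
  f x != 0 -> derivable f x v -> derivable (fun y => (f y)^-1) x v.
Proof. by move=> h df; exact: (derivableV h df). Qed.

Context (a : R -> R).

Definition Ed (s : R) : R :=
  derive1 a s * (- (a s ^+ 2)^-1 * derive1 a s) + (a s)^-1 * derive1 (derive1 a) s.

Lemma Hub_dv t : derivable a t 1 -> derivable (derive1 a) t 1 -> a t != 0 ->
  derivable (Hub a) t 1 /\ derive (Hub a) t 1 = Ed t.
Proof.
move=> da da' an0.
have dV := dvV an0 da.
have [E D] := dM da' dV.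
have -> : Hub a = (fun s => derive1 a s * (a s)^-1) by [].
split; first exact: D.
by rewrite E (deriveV an0 da) /Ed !derive1E.
Qed.

Lemma Ed_dv t : derivable a t 1 -> derivable (derive1 a) t 1 ->
  derivable (derive1 (derive1 a)) t 1 -> a t != 0 -> derivable Ed t 1.
Proof.
move=> da da' da'' an0.
have d2 := dvM da da.
have n2 : a t * a t != 0 by rewrite mulf_neq0.
have d3 := dvN (@dvV _ (fun s => a s * a s) t 1 n2 d2).
have d4 := dvM d3 da'.
have d5 := dvM da' d4.
have d6 := dvM (dvV an0 da) da''.
have d7 := dvD d5 d6.
have -> : Ed = (fun s => derive1 a s * (- (a s * a s)^-1 * derive1 a s) +
   (a s)^-1 * derive1 (derive1 a) s).
  by apply: funext => s; rewrite /Ed expr2.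
exact: d7.
Qed.

Lemma Hdot_dv (I : set R) t : open I -> I t ->
  (forall s, I s -> derivable a s 1 /\ derivable (derive1 a) s 1 /\ a s != 0) ->
  derivable (derive1 (derive1 a)) t 1 -> derivable (Hdot a) t 1.
Proof.
move=> oI It hI da''.
have N := @near_line _ _ I t 1 oI It.
have E : \forall h \near 0, Hdot a (h *: 1 + t) = Ed (h *: 1 + t).
  apply: filterS N => h Ih; have [d1 [d2 d3]] := hI _ Ih.
  by rewrite /Hdot derive1E; have [_ ->] := Hub_dv _ d1 d2 d3.
have [_ ->] := @L_loc _ _ _ _ _ _ E.
have [d1 [d2 d3]] := hI _ It.
exact: Ed_dv.
Qed.

Lemma Hub_dvb (I : set R) t : I t ->
  (forall s, I s -> derivable a s 1 /\ derivable (derive1 a) s 1 /\ a s != 0) ->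
  derivable (Hub a) t 1.
Proof. by move=> It hI; have [d1 [d2 d3]] := hI _ It; have [] := Hub_dv _ d1 d2 d3. Qed.

End S7.


Section S8.
Context {R : realType}.
Context (I : set R) (U : set 'rV[R]_3) (a zeta V : R -> R) (gam : R) (gs : metric R 3).
Hypothesis oI : open I.
Hypothesis oU : open U.
Hypothesis apos : forall t, I t -> 0 < a t.
Hypothesis sa : smooth1_on I a.
Hypothesis sz : smooth1_on I zeta.
Hypothesis sV : smooth1_on I V.
Hypothesis sgs : forall i j, smooth_on U (gs i j).
Hypothesis gsym : forall i j y, gs i j y = gs j i y.
Hypothesis pdef : forall y, U y -> forall v : 'rV[R]_3, v != 0 ->
      0 < (v *m gmx gs y *m v^T) 0 0.

Definition Dset (z : 'rV[R]_4) := I (time z) /\ U (spat z).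

Lemma aI s : I s -> derivable a s 1 /\ derivable (derive1 a) s 1 /\ a s != 0.
Proof.
move=> Is; split; first exact: (sa 0 s Is).
split; first exact: (sa 1 s Is).
by rewrite lt0r_neq0 // apos.
Qed.

Lemma good z : Dset z ->
  [/\ derivable a (time z) 1, a (time z) != 0, gmx gs (spat z) \in unitmx &
      forall i' j' k', derivable (gs i' j') (spat z) (ei k')].
Proof.
move=> [Iz Uz]; have [d1 [_ d3]] := aI _ Iz; split => //.
- exact: (gs_unit gs _ (pdef _ Uz)).
- by move=> i' j' k'; have [+ _] := sgs i' j' [::] _ Uz; apply.
Qed.

Lemma D_near z j : Dset z -> \forall h \near 0, Dset (h *: ei j + z).
Proof.
move=> [Iz Uz].
have N1 := @near_line _ _ I (time z) (dl j) oI Iz.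
have N2 : \forall h \near (0:R), U (spat (h *: ei j + z)).
  case: (unliftP ord0 j) => [j'|] ->.
  - apply: filterS (@near_line _ _ U (spat z) (ei j') oU Uz) => h Uh.
    by rewrite spat_shiftS.
  - by apply: filterS (@near_line _ _ U (spat z) 0 oU Uz) => h _; rewrite spat_shift0.
apply: filterS2 N1 N2 => h h1 h2; split => //.
by rewrite time_shift.
Qed.

Lemma Hdot_at s : I s -> derivable (Hdot a) s 1.
Proof.
move=> Is; exact: (Hdot_dv a I s oI Is aI (sa 2 s Is)).
Qed.

Lemma pd_box z p : Dset z ->
  pd p (box (frw a gs) (@time R)) z = dl p * (-3 * Hdot a (time z)).
Proof.
move=> Dz.
have E : \forall h \near 0, box (frw a gs) (@time R) (h *: ei p + z) =
   (fun w => -3 * Hub a (time w)) (h *: ei p + z).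
  apply: filterS (D_near _ p Dz) => h Dh; have [d1 d2 d3 _] := good _ Dh.
  exact: box_time.
rewrite /pd; have [-> _] := @L_loc _ _ _ (fun w => -3 * Hub a (time w)) _ _ E.
have dH := Hub_dvb a I (time z) (proj1 Dz) aI.
have [E1 D1] := dM (@derivable_cst _ _ _ (-3 : R) (time z) 1) dH.
have [+ _] := @pd_timeF _ (fun s => -3 * Hub a s) p z D1.
rewrite /pd => ->; rewrite E1 derive_cst mulr0 addr0 /Hdot derive1E.
by [].
Qed.

Lemma alg_sw (G dp c dq : R) : G * (dp * c) * dq = G * (dp * dq) * c.
Proof. by ring. Qed.

Lemma alg_X (g v gm c dk dl' z : R) :
  g * (v + gm * ((-1) * (-3 * c))) + 2 * z * dk * dl' - gm * (dk * (dl' * (-3 * c)) + dk * (-3 * c) * dl')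
  = 2 * (z + 3 * gm * c) * - dk * - dl' + (v + 3 * gm * c) * g.
Proof. by ring. Qed.

Lemma X_formula z k l : Dset z ->
  Xmim (frw a gs) (@time R) gam V zeta k l z =
  2 * (zeta (time z) + 3 * gam * Hdot a (time z)) * ucov k z * ucov l z
  + (V (time z) + 3 * gam * Hdot a (time z)) * frw a gs k l z.
Proof.
move=> Dz; have [d1 d2 d3 _] := good _ Dz.
rewrite /Xmim /ucov !pd_time !pd_box //.
under eq_bigr => p _ do (under eq_bigr => q _ do rewrite pd_box // pd_time alg_sw); rewrite /=.
under eq_bigr => p _ do rewrite -mulr_suml.
rewrite -mulr_suml (sum_dl2 (fun p q => ginv (frw a gs) z p q)) (ginv0l _ _ _ _ d2 d3) dl0.
move: (Hdot a (time z)) (dl k) (dl l) (frw a gs k l z) (V (time z)) (zeta (time z)) => c dk dl' g v ze.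
exact: alg_X.
Qed.

Definition Pf (s : R) := 2 * (zeta s + 3 * gam * Hdot a s).
Definition Qf (s : R) := V s + 3 * gam * Hdot a s.
Definition Bf (s : R) := 3^-1 * (2 * zeta s - V s + 3 * gam * Hdot a s).

Lemma dPQB s : I s -> [/\ derivable Pf s 1, derivable Qf s 1 &
  derive Bf s 1 = 3^-1 * (derive Pf s 1 - derive Qf s 1) ].
Proof.
move=> Is.
have dz : derivable zeta s 1 := sz 0 s Is.
have dv : derivable V s 1 := sV 0 s Is.
have dH : derivable (Hdot a) s 1 := Hdot_at _ Is.
have d1 := dvM (@derivable_cst _ _ _ (3 * gam) s 1) dH.
have dP := dvM (@derivable_cst _ _ _ (2 : R) s 1) (dvD dz d1).
have dQ := dvD dv d1.
split; [exact: dP | exact: dQ |].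
have -> : Bf = (fun s => cst (3^-1 : R) s * (Pf s - Qf s)).
  apply: funext => r; rewrite /Bf /Pf /Qf /cst.
  move: (zeta r) (V r) (Hdot a r) => x y w; by ring.
have dPQ : derivable (fun y => Pf y - Qf y) s 1.
  exact: (dvD dP (dvN dQ)).
have [-> _] := dM (@derivable_cst _ _ _ (3^-1 : R) s 1) dPQ.
rewrite derive_cst mulr0 addr0 /cst.
congr (_ * _).
by rewrite (@deriveB _ _ _ Pf Qf s 1 dP dQ).
Qed.

Lemma alg_uu (p dm dn q g : R) : p * - dm * - dn + q * g = p * (dm * dn) + q * g.
Proof. by ring. Qed.

Lemma YX_eq x m n : Dset x ->
  Xmim (frw a gs) (@time R) gam V zeta m n x = Yf a gs Pf Qf m n x.
Proof.
move=> Dx; rewrite X_formula // /Yf /ucov !pd_time.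
exact: alg_uu.
Qed.

Lemma alg_cx (dj dk g P' Q' p h : R) :
  dj*(P'*(dk*1) + Q'*(-dk)) - p*h*((g+dj*dk)*1 + (-dj + dj*1)*dk) =
  dj*dk*(P'-Q') - p*h*(g + dj*dk).
Proof. by ring. Qed.

Lemma covX x j k : Dset x ->
  covD2 (frw a gs) (Xmim (frw a gs) (@time R) gam V zeta) j k ord0 x =
  dl j * dl k * (derive Pf (time x) 1 - derive Qf (time x) 1)
  - Pf (time x) * Hub a (time x) * (frw a gs j k x + dl j * dl k).
Proof.
move=> Dx; have [d1 d2 d3 d4] := good _ Dx; have [dP dQ _] := dPQB _ (proj1 Dx).
have Yx : forall m n, Xmim (frw a gs) (@time R) gam V zeta m n x = Yf a gs Pf Qf m n x.
  by move=> m n; exact: YX_eq.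
have Yn : \forall h \near 0, Xmim (frw a gs) (@time R) gam V zeta k ord0 (h *: ei j + x)
     = Yf a gs Pf Qf k ord0 (h *: ei j + x).
  by apply: filterS (D_near _ j Dx) => h Dh; exact: YX_eq.
rewrite (covD2_form a gs gsym _ Pf Qf x j k ord0 d1 d2 d3 d4 dP dQ Yx Yn).
rewrite dl0 !frw_k0.
move: (dl j) (dl k) (frw a gs j k x) (derive Pf _ _) (derive Qf _ _) (Pf _) (Hub a _).
move=> dj dk g P' Q' p h.
exact: alg_cx.
Qed.

Lemma alg_div (G dj dk A p h g : R) :
  G * (dj * dk * A - p * h * (g + dj * dk)) =
  A * (G * (dj * dk)) - p * h * (G * g) - p * h * (G * (dj * dk)).
Proof. by ring. Qed.

Lemma alg_rel (A c : R) : A * (- (1)) - c * 4%:R - c * (- (1)) = 0 -> A = -3 * c.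
Proof.
move=> hh; apply/eqP; rewrite -subr_eq0.
have -> : A - -3 * c = - (A * (- (1)) - c * 4%:R - c * (- (1))) by ring.
by rewrite hh oppr0.
Qed.

Hypothesis divf : divfree_on (frw a gs) (Xmim (frw a gs) (@time R) gam V zeta) Dset.

Lemma rel_pt x : Dset x ->
  derive Pf (time x) 1 - derive Qf (time x) 1 = -3 * (Pf (time x) * Hub a (time x)).
Proof.
move=> Dx; have [d1 d2 d3 d4] := good _ Dx.
have [U' _] := ginv_frw _ _ _ d2 d3.
have := divf ord0 x Dx.
under eq_bigr => j _ do (under eq_bigr => k _ do rewrite covX // alg_div); rewrite /=.
under eq_bigr => j _ do rewrite !sumrB -!mulr_sumr.
rewrite !sumrB -!mulr_sumr.
rewrite (sum_dl2 (fun j k => ginv (frw a gs) x j k)) (ginv0l _ _ _ _ d2 d3) dl0.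
rewrite G2 //; last by move=> i j; apply: frw_symx.
exact: alg_rel.
Qed.

Definition Cf (k l : 'I_4) (x : 'rV[R]_4) : R :=
  2 * (zeta (time x) + 3 * gam * Hdot a (time x)) * ucov k x * ucov l x
  + 3^-1 * (2 * zeta (time x) - V (time x) + 3 * gam * Hdot a (time x)) * frw a gs k l x.

Lemma Cf_eq x m n : Cf m n x = Yf a gs Pf Bf m n x.
Proof. rewrite /Cf /Yf /ucov !pd_time; exact: alg_uu. Qed.

Lemma alg_cod (dj dk dl' P' B' gkl gjk gkj gjl p h A : R) :
  B' = 3^-1 * A -> A = -3 * (p * h) -> gkj = gjk ->
  dj*(P'*(dk*dl') + B'*gkl) - p*h*((gjk + dj*dk)*dl' + (gjl + dj*dl')*dk) =
  dk*(P'*(dj*dl') + B'*gjl) - p*h*((gkj + dk*dj)*dl' + (gkl+dk*dl')*dj).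
Proof. by move=> -> -> ->; field. Qed.

Lemma codazzi_pt x j k l : Dset x ->
  covD2 (frw a gs) Cf j k l x = covD2 (frw a gs) Cf k j l x.
Proof.
move=> Dx; have [d1 d2 d3 d4] := good _ Dx; have [dP _ EB] := dPQB _ (proj1 Dx).
have dB : derivable Bf (time x) 1.
  have dz : derivable zeta (time x) 1 := sz 0 _ (proj1 Dx).
  have dv : derivable V (time x) 1 := sV 0 _ (proj1 Dx).
  have dH : derivable (Hdot a) (time x) 1 := Hdot_at _ (proj1 Dx).
  have d1' := dvM (@derivable_cst _ _ _ (3 * gam) (time x) 1) dH.
  have d2' := dvM (@derivable_cst _ _ _ (2 : R) (time x) 1) dz.
  exact: (dvM (@derivable_cst _ _ _ (3^-1 : R) (time x) 1) (dvD (dvD d2' (dvN dv)) d1')).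
have Yx : forall m n, Cf m n x = Yf a gs Pf Bf m n x by move=> m n; exact: Cf_eq.
have Yn : forall j k l, \forall h \near 0, Cf k l (h *: ei j + x) = Yf a gs Pf Bf k l (h *: ei j + x).
  by move=> j' k' l'; apply: filterS (D_near _ j' Dx) => h _; exact: Cf_eq.
rewrite (covD2_form a gs gsym _ Pf Bf x j k l d1 d2 d3 d4 dP dB Yx (Yn j k l)).
rewrite (covD2_form a gs gsym _ Pf Bf x k j l d1 d2 d3 d4 dP dB Yx (Yn k j l)).
have RR := rel_pt _ Dx.
rewrite EB RR (frw_symx a gs gsym x k j).
move: (dl j) (dl k) (dl l) (frw a gs k l x) (frw a gs j k x) (frw a gs j l x).
move: (derive Pf _ _) (Pf (time x)) (Hub a (time x)) => P' p h dj dk dl' gkl gjk gjl.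
by field.
Qed.

Lemma alg_tr (p b Ginv00 G : R) :
  p * (Ginv00) + b * G = p * (Ginv00) + b * G.
Proof. by []. Qed.

Lemma alg_tr1 (G p dr ds b g : R) :
  G * (p * - dr * - ds + b * g) = p * (G * (dr * ds)) + b * (G * g).
Proof. by ring. Qed.

Lemma alg_p3 (dk dl' g v ze c : R) :
  2 * (ze + 3 * gam * c) * - dk * - dl' + (v + 3 * gam * c) * g =
  (2 * (ze + 3 * gam * c) * - dk * - dl' + 3^-1 * (2 * ze - v + 3 * gam * c) * g) -
  g * (2 * (ze + 3 * gam * c) * (- (1)) + 3^-1 * (2 * ze - v + 3 * gam * c) * 4%:R).
Proof. by field. Qed.

Lemma part3_pt x k l : Dset x ->
  Xmim (frw a gs) (@time R) gam V zeta k l x = Cf k l x - frw a gs k l x * trace2 (frw a gs) Cf x.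
Proof.
move=> Dx; have [d1 d2 d3 d4] := good _ Dx.
have [U' _] := ginv_frw _ _ _ d2 d3.
rewrite X_formula // /trace2 /Cf.
under eq_bigr => r _ do (under eq_bigr => s _ do rewrite /ucov !pd_time alg_tr1); rewrite /=.
under eq_bigr => r _ do rewrite big_split /= -!mulr_sumr.
rewrite big_split /= -!mulr_sumr.
rewrite (sum_dl2 (fun j k => ginv (frw a gs) x j k)) (ginv0l _ _ _ _ d2 d3) dl0.
rewrite G2 //; last by move=> i j; apply: frw_symx.
rewrite /ucov !pd_time.
move: (dl k) (dl l) (frw a gs k l x) (V (time x)) (zeta (time x)) (Hdot a (time x)).
move=> dk dl' g v ze c.
exact: alg_p3.
Qed.

Lemma main_sec :
  (forall k l x, Dset x ->
     Xmim (frw a gs) (@time R) gam V zeta k l x =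
       2 * (zeta (time x) + 3 * gam * Hdot a (time x)) * ucov k x * ucov l x
       + (V (time x) + 3 * gam * Hdot a (time x)) * frw a gs k l x)
  /\ codazzi_on (frw a gs) Cf Dset
  /\ (forall k l x, Dset x ->
     Xmim (frw a gs) (@time R) gam V zeta k l x =
       Cf k l x - frw a gs k l x * trace2 (frw a gs) Cf x).
Proof.
split; first by move=> k l x Dx; exact: X_formula.
split; first by move=> j k l x Dx; exact: codazzi_pt.
by move=> k l x Dx; exact: part3_pt.
Qed.

End S8.


Theorem mainTheorem11 (R : realType)
  (I : set R) (U : set 'rV[R]_3)
  (a zeta V : R -> R) (gam : R) (gs : metric R 3) :
  open I -> open U ->
  (forall t, I t -> 0 < a t) ->
  smooth1_on I a -> smooth1_on I zeta -> smooth1_on I V ->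
  (forall i j, smooth_on U (gs i j)) ->
  (forall i j y, gs i j y = gs j i y) ->
  (forall y, U y -> forall v : 'rV[R]_3, v != 0 ->
      0 < (v *m gmx gs y *m v^T) 0 0) ->
  const_curvature gs U ->
  let D := [set x : 'rV[R]_4 | I (time x) /\ U (spat x)] in
  let g := frw a gs in
  let X := Xmim g (@time R) gam V zeta in
  divfree_on g X D ->
  let C := fun (k l : 'I_4) (x : 'rV[R]_4) =>
     2 * (zeta (time x) + 3 * gam * Hdot a (time x)) * ucov k x * ucov l x
     + 3^-1 * (2 * zeta (time x) - V (time x) + 3 * gam * Hdot a (time x)) * g k l x in
  (forall k l x, D x ->
     X k l x = 2 * (zeta (time x) + 3 * gam * Hdot a (time x)) * ucov k x * ucov l x
               + (V (time x) + 3 * gam * Hdot a (time x)) * g k l x)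
  /\ codazzi_on g C D
  /\ (forall k l x, D x -> X k l x = C k l x - g k l x * trace2 g C x).
Proof.
move=> oI oU apos sa sz sV sgs gsym pdef cc D g X divf C.
have [H1 [H2 H3]] := (@main_sec R I U a zeta V gam gs oI oU apos sa sz sV sgs gsym pdef divf).
split; first exact H1.
split; first exact H2.
exact H3.
Qed.
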